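(* Let $\mathfrak g=\mathfrak k\oplus\mathfrak m$ be a Pauli-spanned Cartan decomposition and let $b_1,\dots,b_d\in\tilde{\mathfrak m}$ be pairwise commuting Pauli strings (spanning an Abelian subalgebra $\mathfrak b\subseteq\mathfrak m$) all lying in the same connected component of the frustration graph of $\mathfrak g$. If for some $2\le r\le d$ both $\tilde{\mathfrak k}^{r-1}_{1\dots r-2}$ and $\tilde{\mathfrak k}^r_{1\dots r-1}$ are non-empty, then $|\tilde{\mathfrak k}^{r-1}_{1\dots r-2}|>|\tilde{\mathfrak k}^r_{1\dots r-1}|$.
   Context: Pauli strings on $n$ qubits are tensor products of $I,X,Y,Z$, not all identity; two Pauli strings either commute or anticommute. A Pauli-spanned Cartan decomposition is $\mathfrak g=\mathfrak k\oplus\mathfrak m\subseteq\mathfrak{su}(2^n)$ with $\mathfrak k=\mathrm{span}_{i\mathbb R}\tilde{\mathfrak k}$, $\mathfrak m=\mathrm{span}_{i\mathbb R}\tilde{\mathfrak m}$, $\mathfrak g=\mathrm{span}_{i\mathbb R}\tilde{\mathfrak g}$ with $\tilde{\mathfrak g}=\tilde{\mathfrak k}\sqcup\tilde{\mathfrak m}$ the set of all Pauli strings (up to phase) $\sigma$ with $i\sigma\in\mathfrak g$, and $[\mathfrak k,\mathfrak k]\subseteq\mathfrak k$, $[\mathfrak m,\mathfrak m]\subseteq\mathfrak k$, $[\mathfrak k,\mathfrak m]\subseteq\mathfrak m$. The frustration graph of $\mathfrak g$ has vertex set $\tilde{\mathfrak g}$, with edges between anticommuting pairs. For disjoint index lists,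 $\tilde{\mathfrak k}^{i_1i_2\dots}_{j_1j_2\dots}$ is the set of $k\in\tilde{\mathfrak k}$ anticommuting with every $b_{i_p}$ and commuting with every $b_{j_q}$ (no condition on other indices). *)

(* Defs.v *)
From mathcomp Require Import all_boot.
Set Implicit Arguments. Unset Strict Implicit. Unset Printing Implicit Defensive.

(* A Pauli string on n qubits, up to phase: at each qubit a pair (x,z) of bits,
   (false,false)=I, (true,false)=X, (true,true)=Y, (false,true)=Z. *)
Definition pauli (n : nat) := {ffun 'I_n -> bool * bool}.

(* the all-identity string (not a Pauli string in the paper's sense) *)
Definition pid (n : nat) : pauli n := [ffun => (false, false)].

Definition anticomm (n : nat) (s t : pauli n) : bool :=
  odd #|[set i : 'I_n | ((s i).1 && (t i).2) (+) ((s i).2 && (t i).1)]|.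

Definition pmul (n : nat) (s t : pauli n) : pauli n :=
  [ffun i => ((s i).1 (+) (t i).1, (s i).2 (+) (t i).2)].

(* Pauli-spanned Cartan decomposition g = k (+) m, given by the sets of Pauli
   strings ktil, mtil spanning k and m.  For Pauli strings s,t one has
   [is, it] = 0 if they commute and [is,it] = +-2 i (s t) otherwise, with s t a
   Pauli string up to phase; since Pauli strings form a basis, the bracket
   inclusions [k,k] <= k, [m,m] <= k, [k,m] <= m are exactly the closure
   conditions below. *)
Definition pauli_cartan (n : nat) (ktil mtil : {set pauli n}) : Prop :=
  [/\ pid n \notin ktil, pid n \notin mtil & [disjoint ktil & mtil]] /\
  [/\ {in ktil &, forall a b, anticomm a b -> pmul a b \in ktil},
      {in mtil &, forall a b, anticomm a b -> pmul a b \in ktil} &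
      {in ktil & mtil, forall a b, anticomm a b -> pmul a b \in mtil}].

Definition frust (n : nat) (gtil : {set pauli n}) : rel (pauli n) :=
  fun a b => [&& a \in gtil, b \in gtil & anticomm a b].

(* ktil^{A}_{C}: elements of ktil anticommuting with every b_i (i in A)
   and commuting with every b_j (j in C) *)
Definition ksub (n d : nat) (ktil : {set pauli n}) (b : 'I_d -> pauli n)
    (A C : {set 'I_d}) : {set pauli n} :=
  [set k in ktil | [forall i in A, anticomm k (b i)] &&
                   [forall j in C, ~~ anticomm k (b j)]].

(* Main.v *)
Require Import Defs.
From mathcomp Require Import all_boot zify.
Set Implicit Arguments. Unset Strict Implicit. Unset Printing Implicit Defensive.
Lemma cardP (T : finType) (P : pred T) : #|[set i | P i]| = \sum_i (P i : nat).
Proof. by rewrite -sum1_card big_mkcond /=; apply: eq_bigr => i _; rewrite inE; case: (P i). Qed.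
Lemma odd_card_xor (T: finType) (P Q : pred T):
 odd #|[set i | P i (+) Q i]| = odd #|[set i | P i]| (+) odd #|[set i | Q i]|.
Proof.
have E: #|[set i | P i (+) Q i]| + (#|[set i | P i && Q i]|).*2 = #|[set i | P i]| + #|[set i | Q i]|.
  rewrite -addnn !cardP -!big_split /=; apply: eq_bigr => i _.
  by case: (P i); case: (Q i).
by rewrite -oddD -E oddD odd_double addbF.
Qed.
Section Alg.
Variable n : nat.
Implicit Types s t u : pauli n.

Lemma acC s t : anticomm s t = anticomm t s.
Proof.
rewrite /anticomm; congr odd; apply: eq_card => i; rewrite !inE.
by case: (s i) => [[] []]; case: (t i) => [[] []].
Qed.

Lemma acxx s : anticomm s s = false.
Proof.
rewrite /anticomm (_ : [set i | _] = set0) ?cards0 //.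
by apply/setP => i; rewrite !inE; case: (s i) => [[] []].
Qed.

Lemma acDl s t u : anticomm (pmul s t) u = anticomm s u (+) anticomm t u.
Proof.
rewrite /anticomm -odd_card_xor; congr odd; apply: eq_card => i; rewrite !inE !ffunE /=.
by case: (s i) => [[] []]; case: (t i) => [[] []]; case: (u i) => [[] []].
Qed.

Lemma acDr s t u : anticomm u (pmul s t) = anticomm u s (+) anticomm u t.
Proof. by rewrite acC acDl !(acC u). Qed.

Lemma pmulC s t : pmul s t = pmul t s.
Proof. by apply/ffunP => i; rewrite !ffunE addbC [X in (_, X)]addbC. Qed.

Lemma pmulA s t u : pmul s (pmul t u) = pmul (pmul s t) u.
Proof. by apply/ffunP => i; rewrite !ffunE /= !addbA. Qed.

Lemma pmulK s t : pmul (pmul s t) t = s.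
Proof. by apply/ffunP => i; rewrite !ffunE /= -!addbA !addbb !addbF; case: (s i). Qed.

Lemma pmulI s t u : pmul s t = pmul u t -> s = u.
Proof. by move=> h; rewrite -(pmulK s t) h pmulK. Qed.
End Alg.
Lemma pmul_e4 n (s t u w : pauli n) :
  pmul w (pmul u (pmul t (pmul s w))) = pmul (pmul s t) u.
Proof.
apply/ffunP => i; rewrite !ffunE /=.
case: (s i) => s1 s2; case: (t i) => t1 t2; case: (u i) => u1 u2; case: (w i) => w1 w2 /=.
by case: s1; case: t1; case: u1; case: w1; case: s2; case: t2; case: u2; case: w2.
Qed.
Lemma dist2 n (g : {set pauli n})
  (gcl : {in g &, forall a b, anticomm a b -> pmul a b \in g}) (u v : pauli n) :
  connect (frust g) u v ->
  [\/ v = u, anticomm u v | exists2 w, w \in g & anticomm w u && anticomm w v].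
Proof.
move/connectP => [p pp ->].
suff H : forall p y,
  [\/ y = u, anticomm u y | exists2 w, w \in g & anticomm w u && anticomm w y] ->
  path (frust g) y p ->
  [\/ last y p = u, anticomm u (last y p) | exists2 w, w \in g & anticomm w u && anticomm w (last y p)].
  by apply: H pp; constructor 1.
elim=> [|z q IH] y Dy //= /andP [e qq]; apply: IH qq.
move: e; rewrite /frust => /and3P [yg zg yz].
case Huz: (anticomm u z); first by constructor 2.
constructor 3; case: Dy => [eyu | Huy | [w wg /andP [wu wy]]].
- by move: Huz; rewrite -eyu yz.
- by exists y => //; rewrite acC Huy yz.
- case Hwz: (anticomm w z); first by exists w => //; rewrite wu.
  case Huy: (anticomm u y); first by exists y => //; rewrite acC Huy yz.
  exists (pmul w y); first exact: gcl.
  by rewrite !acDl wu Hwz yz (acC y u) Huy.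
Qed.
Lemma ksubP n d (ktil : {set pauli n}) (b : 'I_d -> pauli n) (A C : {set 'I_d}) k :
  reflect [/\ k \in ktil, (forall i, i \in A -> anticomm k (b i))
          & (forall j, j \in C -> ~~ anticomm k (b j))] (k \in ksub ktil b A C).
Proof.
rewrite inE; apply: (iffP idP).
  by case/andP => kk /andP [/forallP hA /forallP hC]; split => // i hi;
    [move/implyP: (hA i); apply | move/implyP: (hC i); apply].
case=> kk hA hC; rewrite kk /=; apply/andP; split; apply/forallP => i; apply/implyP;
  [exact: hA | exact: hC].
Qed.

Theorem lemmaC3 (n d : nat) (ktil mtil : {set pauli n})
    (b : 'I_d -> pauli n) (r : nat) :
  pauli_cartan ktil mtil ->
  (forall i, b i \in mtil) ->
  (forall i j, ~~ anticomm (b i) (b j)) ->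
  (forall i j, connect (frust (ktil :|: mtil)) (b i) (b j)) ->
  2 <= r <= d ->
  let K1 := ksub ktil b [set i : 'I_d | i.+1 == r - 1]
                        [set i : 'I_d | i.+1 <= r - 2] in
  let K2 := ksub ktil b [set i : 'I_d | i.+1 == r]
                        [set i : 'I_d | i.+1 <= r - 1] in
  K1 != set0 -> K2 != set0 ->
  #|K2| < #|K1|.
Proof.
move=> [[kid mid dis] [kk mm km]] bm bcomm bconn /andP [r2 rd] K1 K2 K1n K2n.
have bc i j : anticomm (b i) (b j) = false by apply/negbTE.
set g := ktil :|: mtil.
have gcl : {in g &, forall x y, anticomm x y -> pmul x y \in g}.
  move=> x y; rewrite !inE => /orP [xk|xm] /orP [yk|ym] h; apply/orP.
  - by left; apply: kk.
  - by right; apply: km.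
  - by right; rewrite pmulC; apply: km => //; rewrite acC.
  - by left; apply: mm.
have h12 : r - 2 < r - 1 by clear -r2; lia.
have i1lt : r - 2 < d by lia.
have i2lt : r - 1 < d by lia.
pose i1 := Ordinal i1lt; pose i2 := Ordinal i2lt.
have A1E (i : 'I_d) : (i.+1 == r - 1) = (i == i1).
  by rewrite -val_eqE /=; apply/eqP/eqP; lia.
have A2E (i : 'I_d) : (i.+1 == r) = (i == i2).
  by rewrite -val_eqE /=; apply/eqP/eqP; lia.
have inK1 k : k \in K1 <-> [/\ k \in ktil, anticomm k (b i1)
                        & forall j : 'I_d, j < r - 2 -> ~~ anticomm k (b j)].
  split.
    move/ksubP => [h1 h2 h3]; split => //.
      by apply: h2; rewrite inE A1E.
    by move=> j hj; apply: h3; rewrite inE.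
  move=> [h1 h2 h3]; apply/ksubP; split => //.
    by move=> i; rewrite inE A1E => /eqP ->.
  by move=> j; rewrite inE; apply: h3.
have inK2 k : k \in K2 <-> [/\ k \in ktil, anticomm k (b i2)
                        & forall j : 'I_d, j < r - 1 -> ~~ anticomm k (b j)].
  split.
    move/ksubP => [h1 h2 h3]; split => //.
      by apply: h2; rewrite inE A2E.
    by move=> j hj; apply: h3; rewrite inE.
  move=> [h1 h2 h3]; apply/ksubP; split => //.
    by move=> i; rewrite inE A2E => /eqP ->.
  by move=> j; rewrite inE; apply: h3.
set a := b i1; set c := b i2.
have am : a \in mtil by apply: bm.
have cm : c \in mtil by apply: bm.
have ac_ : anticomm a c = false by apply: bc.
have ca_ : anticomm c a = false by apply: bc.
case/set0Pn: K1n => k1 /inK1 [k1k k1a k1B].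
case/set0Pn: K2n => k2 /inK2 [k2k k2c k2B].
rewrite -/a in k1a; rewrite -/c in k2c.
have k2a : anticomm k2 a = false by apply/negbTE/k2B.
have gk x : x \in ktil -> x \in g by move=> h; rewrite inE h.
have gm x : x \in mtil -> x \in g by move=> h; rewrite inE h orbT.
have [x [xg xa xc xB]] : exists x, [/\ x \in g, anticomm x a, anticomm x c
                 & forall j : 'I_d, j < r - 2 -> anticomm x (b j) = false].
  have k1B' (j : 'I_d) : j < r - 2 -> anticomm k1 (b j) = false by move/k1B/negbTE.
  have k2B' (j : 'I_d) : j < r - 2 -> anticomm k2 (b j) = false by move=> h; apply/negbTE/k2B/(ltn_trans h h12).
  case Hk1c: (anticomm k1 c).
    by exists k1; split => //; apply: gk.
  case Hk12: (anticomm k1 k2).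
    exists (pmul k1 k2); split.
    - by apply: gk; apply: kk.
    - by rewrite acDl k1a k2a.
    - by rewrite acDl Hk1c k2c.
    - by move=> j hj; rewrite acDl k1B' ?k2B'.
  have := dist2 gcl (bconn i1 i2); rewrite -/a -/c.
  case=> [eca | hac | [w wg /andP [wa wc]]].
  - by move: k2c; rewrite eca k2a.
  - by move: hac; rewrite ac_.
  case: (boolP [forall j : 'I_d, (j < r - 2) ==> ~~ anticomm w (b j)]) => [/forallP hw | ].
    by exists w; split => // j hj; apply/negbTE; move/implyP: (hw j); apply.
  rewrite negb_forall => /existsP [bb]; rewrite negb_imply negbK => /andP [bblt wb].
  have bbm : b bb \in mtil by apply: bm.
  have k1bb := k1B' _ bblt; have k2bb := k2B' _ bblt.
  have abb : anticomm a (b bb) = false by apply: bc.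
  have cbb : anticomm c (b bb) = false by apply: bc.
  have [w1 [w1g w1a w1c w1b w1k1]] : exists w1, [/\ w1 \in g, anticomm w1 a,
      anticomm w1 c, anticomm w1 (b bb) & anticomm w1 k1].
    case Hwk1: (anticomm w k1); first by exists w.
    exists (pmul w a); split.
    - by apply: gcl => //; apply: gm.
    - by rewrite acDl acxx wa.
    - by rewrite acDl wc ac_.
    - by rewrite acDl wb abb.
    - by rewrite acDl Hwk1 acC k1a.
  have [w2 [w2g [w2a w2c w2b w2k1 w2k2]]] : exists w2, w2 \in g /\ [/\ anticomm w2 a,
      anticomm w2 c, anticomm w2 (b bb), anticomm w2 k1 & anticomm w2 k2].
    case Hwk2: (anticomm w1 k2); first by exists w1; split.
    exists (pmul w1 c); split; first by apply: gcl => //; apply: gm.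
    split.
    - by rewrite acDl w1a ca_.
    - by rewrite acDl acxx w1c.
    - by rewrite acDl w1b cbb.
    - by rewrite acDl w1k1 acC Hk1c.
    - by rewrite acDl Hwk2 acC k2c.
  have y1g : pmul k1 w2 \in g by apply: gcl => //; [apply: gk | rewrite acC].
  have y2g : pmul k2 (pmul k1 w2) \in g.
    apply: gcl => //; first by apply: gk.
    by rewrite acDr acC Hk12 acC w2k2.
  have y3g : pmul (b bb) (pmul k2 (pmul k1 w2)) \in g.
    apply: gcl => //; first by apply: gm.
    by rewrite !acDr acC k2bb acC k1bb acC w2b.
  have y4g : pmul w2 (pmul (b bb) (pmul k2 (pmul k1 w2))) \in g.
    apply: gcl => //.
    by rewrite !acDr w2b w2k2 w2k1 acxx.
  exists (pmul (pmul k1 k2) (b bb)); split.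
  - by rewrite -(pmul_e4 _ _ _ w2).
  - by rewrite !acDl k1a k2a acC abb.
  - by rewrite !acDl Hk1c k2c acC cbb.
  - by move=> j hj; rewrite !acDl k1B' ?k2B' ?bc.
have [ks [ksk ksa ksc ksB]] : exists ks, [/\ ks \in ktil, anticomm ks a, anticomm ks c
                 & forall j : 'I_d, j < r - 2 -> anticomm ks (b j) = false].
  case/setUP: xg => [xk | xm]; first by exists x.
  exists (pmul x a); split.
  - exact: mm.
  - by rewrite acDl acxx xa.
  - by rewrite acDl xc ac_.
  - by move=> j hj; rewrite acDl xB ?bc.
have ksK1 : ks \in K1 by apply/inK1; split => // j hj; rewrite ksB.
pose f k := if anticomm k ks then pmul k ks else pmul (pmul (pmul k c) ks) a.
have fK k : k \in K2 -> f k \in K1 :\ ks.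
  move=> /inK2 [kk' kc kB]; rewrite -/c in kc.
  have ka : anticomm k a = false by apply/negbTE/kB.
  have kB' (j : 'I_d) : j < r - 2 -> anticomm k (b j) = false.
    by move=> hj; apply/negbTE/kB/(ltn_trans hj h12).
  have fc : anticomm (f k) c = false.
    by rewrite /f; case: ifP => _; rewrite !acDl kc ksc ?acxx ?ac_.
  rewrite in_setD1; apply/andP; split.
    by apply/eqP => e; move: fc; rewrite e ksc.
  apply/inK1; rewrite /f; case: ifP => hks; split.
  - exact: kk.
  - by rewrite acDl ka ksa.
  - by move=> j hj; rewrite acDl kB' ?ksB.
  - have mkc : pmul k c \in mtil by apply: km.
    have mkcks : pmul (pmul k c) ks \in mtil.
      by rewrite pmulC; apply: km => //; rewrite acDr (acC ks k) hks ksc.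
    by apply: mm => //; rewrite -/a !acDl ka ca_ ksa ?acxx.
  - by rewrite -/a !acDl ka ca_ ksa ?acxx.
  - by move=> j hj; rewrite !acDl kB' ?ksB ?bc.
have inj : {in K2 &, injective f}.
  move=> k k' _ _; rewrite /f.
  case: ifP => h; case: ifP => h'.
  - by move/pmulI.
  - move/(congr1 (fun x => anticomm x ks)).
    by rewrite !acDl acxx h h' (acC c ks) ksc (acC a ks) ksa.
  - move/(congr1 (fun x => anticomm x ks)).
    by rewrite !acDl acxx h h' (acC c ks) ksc (acC a ks) ksa.
  - by move/pmulI/pmulI/pmulI.
rewrite (cardsD1 ks K1) ksK1 add1n ltnS -(card_in_imset inj).
apply: subset_leq_card; apply/subsetP => y /imsetP [k kK2 ->]; exact: fK.
Qed.
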